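(* Let $q$ be a prime, $n\ge1$, and let $S \subset \mathbb{F}_q^n\times\mathbb{F}_q^n$ contain no three points of the form $(x,y),(x,y+d),(x+d,y')$ with $x,y,y'\in\mathbb{F}_q^n$, $d\in\mathbb{F}_q^n\setminus\{0\}$. Let $X\subset \mathbb{F}_q^n$ be the projection of $S$ onto the first coordinate and, for $x\in X$, let $C_x=\{y\in\mathbb{F}_q^n : (x,y)\in S\}$. Let $d\ge 0$ and let $P$ be a polynomial in $n$ variables over $\mathbb{F}_q$ that is a linear combination of monomials $x_1^{a_1}\cdots x_n^{a_n}$ with $0\le a_i\le q-1$ and $\sum a_i\le d$, and suppose $P$ vanishes at every point of $\mathbb{F}_q^n\setminus X$. Then for every $x\in X$ with $P(x)\neq 0$, $$|C_x| \le 2\, m_{d/2}(q,n),$$ where $m_{k}(q,n)$ denotes the number of monomials $x_1^{a_1}\cdots x_n^{a_n}$ with $0\le a_i\le q-1$ for all $i$ and $a_1+\dots+a_n\le k$. *)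

(* Defs.v *)
From HB Require Import structures.
From mathcomp Require Import all_boot all_order all_algebra.
From mathcomp Require Import mpoly.
Set Implicit Arguments. Unset Strict Implicit. Unset Printing Implicit Defensive.
Import GRing.Theory.
Local Open Scope ring_scope.

Definition m_half (q n d : nat) : nat :=
  #|[set a : {ffun 'I_n -> 'I_q} | ((\sum_(i < n) (a i : nat)).*2 <= d)%N]|.

Definition reduced_deg_le (q n d : nat) (P : {mpoly 'F_q[n]}) : Prop :=
  forall m : 'X_{1..n}, m \in msupp P -> (forall i, (m i < q)%N) /\ (mdeg m <= d)%N.

Definition evalv (q n : nat) (P : {mpoly 'F_q[n]}) (x : 'rV['F_q]_n) : 'F_q :=
  P.@[fun i => x ord0 i].

(* Main.v *)
Require Import Defs.
From HB Require Import structures.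
From mathcomp Require Import all_boot all_order all_algebra all_field.
From mathcomp Require Import mpoly.
From mathcomp Require Import ring zify.
Import GRing.Theory.
Local Open Scope ring_scope.

Lemma sum_enum_set (R : nmodType) (T : finType) (A : {set T}) (f : T -> R) :
  \sum_(a in A) f a = \sum_(k < #|A|) f (enum_val k).
Proof. exact: big_enum_val. Qed.

Section Helpers.
Set Implicit Arguments. Unset Strict Implicit.
Variables (q n : nat).
Hypothesis hq : prime q.
Local Notation F := 'F_q.
Local Notation V := 'rV[F]_n.

Definition mon (u : 'I_n -> nat) (y : V) : F := \prod_i y ord0 i ^+ u i.
Definition sz (u : 'I_n -> nat) : nat := (\sum_i u i)%N.

Inductive PD : nat -> (V -> V -> F) -> Prop :=
| PDterm D c u v : (sz u + sz v <= D)%N -> PD D (fun y y' => c * mon u y * mon v y')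
| PDadd D f g : PD D f -> PD D g -> PD D (fun y y' => f y y' + g y y')
| PDext D f g : (forall y y', f y y' = g y y') -> PD D f -> PD D g.

Lemma PD_mono D E f : PD D f -> (D <= E)%N -> PD E f.
Proof.
elim=> {D f} [D c u v h|D f g _ IH1 _ IH2|D f g e _ IH] hDE.
- by apply: PDterm; apply: leq_trans hDE.
- by apply: PDadd; [apply: IH1|apply: IH2].
- by apply: (PDext e); apply: IH.
Qed.

Lemma mon_add u u' y : mon (fun i => u i + u' i)%N y = mon u y * mon u' y.
Proof. by rewrite /mon -big_split /=; apply: eq_bigr => i _; rewrite exprD. Qed.

Lemma sz_add u u' : sz (fun i => u i + u' i)%N = (sz u + sz u')%N.
Proof. by rewrite /sz big_split. Qed.

Lemma PD_mul D E f g : PD D f -> PD E g ->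
  PD (D + E) (fun y y' => f y y' * g y y').
Proof.
move=> hf hg; elim: hf => {D f} [D c u v h|D f g1 _ IH1 _ IH2|D f g1 e _ IH].
- elim: hg => {E g} [E c' u' v' h'|E f g1 _ IH1 _ IH2|E f g1 e _ IH].
  + apply: (PDext (f := fun y y' => (c * c') * mon (fun i => u i + u' i)%N y
                     * mon (fun i => v i + v' i)%N y')).
      by move=> y y'; rewrite !mon_add; ring.
    apply: PDterm; rewrite !sz_add; lia.
  + apply: (PDext _ (PDadd IH1 IH2)) => y y' /=; ring.
  + by apply: (PDext _ IH) => y y' /=; rewrite e.
- by apply: (PDext _ (PDadd IH1 IH2)) => y y' /=; rewrite mulrDl.
- by apply: (PDext _ IH) => y y' /=; rewrite e.
Qed.

Lemma mon0 y : mon (fun _ => 0%N) y = 1.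
Proof. by rewrite /mon big1 // => i _; rewrite expr0. Qed.

Lemma sz0 : sz (fun _ => 0%N) = 0%N.
Proof. by rewrite /sz big1. Qed.

Lemma PD_const c : PD 0 (fun _ _ => c).
Proof.
apply: (PDext (f := fun y y' => c * mon (fun _ => 0%N) y * mon (fun _ => 0%N) y')).
  by move=> y y'; rewrite !mon0 !mulr1.
by apply: PDterm; rewrite sz0.
Qed.

Lemma PD_pow f k : PD 1 f -> PD k (fun y y' => f y y' ^+ k).
Proof.
move=> hf; elim: k => [|k IH].
  by apply: (PDext _ (PD_const 1)) => y y'; rewrite expr0.
by apply: (PDext _ (PD_mul hf IH)) => y y' /=; rewrite exprS.
Qed.

Lemma PD_prod (r : seq 'I_n) (m : 'I_n -> nat) (f : 'I_n -> V -> V -> F) :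
  (forall i, PD (m i) (f i)) ->
  PD (\sum_(i <- r) m i)%N (fun y y' => \prod_(i <- r) f i y y').
Proof.
move=> hf; elim: r => [|i r IH].
  by rewrite big_nil; apply: (PDext _ (PD_const 1)) => y y'; rewrite big_nil.
rewrite big_cons; apply: (PDext _ (PD_mul (hf i) IH)) => y y' /=.
by rewrite big_cons.
Qed.

Lemma PD_sum (T : eqType) D (r : seq T) (c : T -> F) (g : T -> V -> V -> F) :
  (forall m, m \in r -> PD D (g m)) ->
  PD D (fun y y' => \sum_(m <- r) c m * g m y y').
Proof.
elim: r => [|m r IH] h.
  by apply: (PDext _ (PD_mono (PD_const 0) (leq0n D))) => y y'; rewrite big_nil.
have := PD_mul (PD_const (c m)) (h m (mem_head _ _)); rewrite add0n => h1.
apply: (PDext _ (PDadd h1 (IH (fun m' hm' => h m' (@mem_behead _ (m :: r) _ hm'))))).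
by move=> y y' /=; rewrite big_cons.
Qed.

Definition delta (i : 'I_n) : 'I_n -> nat := fun j => (j == i : nat).

Lemma mon_delta i y : mon (delta i) y = y ord0 i.
Proof.
rewrite /mon (bigD1 i) //= /delta eqxx expr1 big1 ?mulr1 // => j /negPf ->.
by rewrite expr0.
Qed.

Lemma sz_delta i : sz (delta i) = 1%N.
Proof.
by rewrite /sz (bigD1 i) //= /delta eqxx big1 // => j /negPf ->.
Qed.

Lemma PD_coord (x : V) i : PD 1 (fun y y' => (x + y' - y) ord0 i).
Proof.
apply: (PDext (f := fun y y' =>
   (x ord0 i * mon (fun _ => 0%N) y * mon (fun _ => 0%N) y' +
    1 * mon (fun _ => 0%N) y * mon (delta i) y') +
   (-1) * mon (delta i) y * mon (fun _ => 0%N) y')).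
  by move=> y y'; rewrite !mon0 !mon_delta !mxE; ring.
apply: PDadd; [apply: PDadd|]; apply: PDterm; rewrite ?sz0 ?sz_delta //.
Qed.

Lemma PD_eval (x : V) d (P : {mpoly F[n]}) : reduced_deg_le d P ->
  PD d (fun y y' => evalv P (x + y' - y)).
Proof.
move=> hP.
apply: (PDext (f := fun y y' => \sum_(m <- msupp P) P@_m *
     (fun m y y' => \prod_(i <- index_enum 'I_n) (x + y' - y) ord0 i ^+ m i) m y y')).
  by move=> y y'; rewrite /evalv mevalE.
apply: PD_sum => m hm.
apply: (PD_mono (D := (\sum_(i <- index_enum 'I_n) m i)%N)).
  apply: PD_prod => i; exact: PD_pow (PD_coord x i).
by have [_] := hP m hm; rewrite mdegE.
Qed.

Definition redn (j : nat) : nat := if j is k.+1 then (k %% q.-1).+1 else 0%N.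

Lemma q_gt1 : (1 < q)%N. Proof. exact: prime_gt1. Qed.

Lemma redn_lt j : (redn j < q)%N.
Proof.
case: j => [|k] /=; first by have := q_gt1; lia.
have := q_gt1 => h1.
have : (k %% q.-1 < q.-1)%N by rewrite ltn_mod; lia.
lia.
Qed.

Lemma redn_le j : (redn j <= j)%N.
Proof. by case: j => [|k] //=; rewrite ltnS leq_mod. Qed.

Lemma Fq_pow (y : F) j : y ^+ j = y ^+ redn j.
Proof.
have hF : y ^+ q = y by have := expf_card y; rewrite card_Fp.
case: j => [|k] //=.
rewrite {1}(divn_eq k q.-1).
elim: (k %/ q.-1)%N => [|t IH]; first by rewrite mul0n add0n.
have -> : ((t.+1 * q.-1 + k %% q.-1).+1 = (t * q.-1 + k %% q.-1) + q)%N.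
  have := q_gt1; rewrite mulSn; lia.
by rewrite exprD hF -exprSr.
Qed.

Definition redo (j : nat) : 'I_q := Ordinal (redn_lt j).

Variable d : nat.
Definition AA : {set {ffun 'I_n -> 'I_q}} :=
  [set a : {ffun 'I_n -> 'I_q} | ((\sum_(i < n) (a i : nat)).*2 <= d)%N].
Definition monA (a : {ffun 'I_n -> 'I_q}) (y : V) : F := mon (fun i => a i) y.

Definition Dec (f : V -> V -> F) := exists G H : {ffun 'I_n -> 'I_q} -> V -> F,
  forall y y', f y y' = \sum_(a in AA) monA a y * G a y' + \sum_(a in AA) H a y * monA a y'.

Lemma red_mon u y : monA [ffun i => redo (u i)] y = mon u y.
Proof. by rewrite /monA /mon; apply: eq_bigr => i _; rewrite ffunE /= -Fq_pow. Qed.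

Lemma red_in u : ((sz u).*2 <= d)%N -> [ffun i => redo (u i)] \in AA.
Proof.
move=> h; rewrite inE; apply: leq_trans h; rewrite leq_double /sz.
by apply: leq_sum => i _; rewrite ffunE /= redn_le.
Qed.

Lemma PD_Dec D f : PD D f -> (D <= d)%N -> Dec f.
Proof.
elim=> {D f} [D c u v h|D f g _ IH1 _ IH2|D f g e _ IH] hD.
- have [hu|hu] := leqP (sz u).*2 d.
    set a := [ffun i => redo (u i)].
    exists (fun a' y' => if a' == a then c * mon v y' else 0), (fun _ _ => 0).
    move=> y y'; rewrite (bigD1 a) ?red_in //= eqxx big1; last first.
      by move=> a' /andP [_ /negPf ->]; rewrite mulr0.
    rewrite [X in _ + X]big1 => [|? _]; last by rewrite mul0r.
    by rewrite red_mon; ring.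
  have hv : ((sz v).*2 <= d)%N by lia.
  set a := [ffun i => redo (v i)].
  exists (fun _ _ => 0), (fun a' y => if a' == a then c * mon u y else 0).
  move=> y y'; rewrite [X in _ + X](bigD1 a) ?red_in //= eqxx.
  rewrite [X in X + _]big1; last by move=> ? _; rewrite mulr0.
  rewrite big1; last by move=> a' /andP [_ /negPf ->]; rewrite mul0r.
  by rewrite red_mon; ring.
- have [G1 [H1 h1]] := IH1 hD; have [G2 [H2 h2]] := IH2 hD.
  exists (fun a y' => G1 a y' + G2 a y'), (fun a y => H1 a y + H2 a y).
  move=> y y'; rewrite h1 h2.
  under [X in _ = X + _]eq_bigr do rewrite mulrDr.
  under [X in _ = _ + X]eq_bigr do rewrite mulrDl.
  rewrite !big_split /=; ring.
- have [G [H h]] := IH hD; exists G, H => y y'; by rewrite -e h.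
Qed.

End Helpers.

Theorem mainTheorem5 (q n : nat) (hq : prime q) (hn : (1 <= n)%N)
  (S : {set 'rV['F_q]_n * 'rV['F_q]_n})
  (hS : forall x y y' dd : 'rV['F_q]_n, dd != 0 ->
          ~ [/\ (x, y) \in S, (x, y + dd) \in S & (x + dd, y') \in S])
  (d : nat) (P : {mpoly 'F_q[n]}) (hP : reduced_deg_le d P)
  (hvan : forall x : 'rV['F_q]_n, (forall y, (x, y) \notin S) -> evalv P x = 0) :
  forall x : 'rV['F_q]_n, (exists y, (x, y) \in S) -> evalv P x != 0 ->
    (#|[set y | (x, y) \in S]| <= 2 * m_half q n d)%N.
Proof.
move=> x _ hPx.
have [G [H hGH]] := PD_Dec hq (PD_eval hq x hP) (leqnn d).
set C := [set y | (x, y) \in S].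
pose Am : 'M['F_q]_(#|C|, #|AA q n d| + #|AA q n d|) :=
  row_mx (\matrix_(i < #|C|, k < #|AA q n d|) monA (enum_val k) (enum_val i))
         (\matrix_(i < #|C|, k < #|AA q n d|) H (enum_val k) (enum_val i)).
pose Bm : 'M['F_q]_(#|AA q n d| + #|AA q n d|, #|C|) :=
  col_mx (\matrix_(k < #|AA q n d|, j < #|C|) G (enum_val k) (enum_val j))
         (\matrix_(k < #|AA q n d|, j < #|C|) monA (enum_val k) (enum_val j)).
have hAB : Am *m Bm = (evalv P x)%:M.
  apply/matrixP => i j; rewrite mul_row_col !mxE.
  under eq_bigr do rewrite !mxE.
  under [X in _ + X = _]eq_bigr do rewrite !mxE.
  have := hGH (enum_val i) (enum_val j).
  rewrite (@sum_enum_set _ _ _ (fun a => monA a (enum_val i) * G a (enum_val j))).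
  rewrite (@sum_enum_set _ _ _ (fun a => H a (enum_val i) * monA a (enum_val j))) => <-.
  case: (eqVneq i j) => [->|ne]; first by rewrite addrK mulr1n.
  rewrite mulr0n -addrA; apply: hvan => y'; apply/negP => hy.
  have hi : enum_val i \in C := enum_valP i.
  have hj : enum_val j \in C := enum_valP j.
  rewrite !inE in hi hj.
  apply: (hS x (enum_val i) y' (enum_val j - enum_val i)).
    by rewrite subr_eq0; apply: contra ne => /eqP /enum_val_inj ->.
  by split=> //; rewrite addrC subrK.
have hr : (#|C| <= \rank Am)%N.
  apply: (mulmx1_min_rank (M := 1%:M) (N := (evalv P x)^-1 *: Bm)).
  by rewrite mul1mx -scalemxAr hAB scale_scalar_mx mulVf.
apply: leq_trans hr _; apply: leq_trans (rank_leq_col _) _.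
by rewrite /m_half mul2n -addnn.
Qed.
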